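(* Suppose $k,m\ge 0$ are integers, $1\le d_1\le\cdots\le d_k$ and $1\le e_1<e_2<\cdots<e_\ell$ are integers, and $$\sum_{i=1}^k(1+2^{-d_i})=m+\sum_{i=1}^\ell 2^{-e_i}.$$ Then $m\ge\ell$. *)

(* Defs.v *)
From mathcomp Require Import all_boot all_order all_algebra.
Set Implicit Arguments. Unset Strict Implicit. Unset Printing Implicit Defensive.

(* Main.v *)
Require Import Defs.
From mathcomp Require Import all_boot all_order all_algebra.
From mathcomp Require Import zify.
Import Order.TTheory GRing.Theory Num.Theory.

Definition P2 (s : seq nat) : nat := \sum_(x <- s) 2 ^ x.
Definition shr (s : seq nat) : seq nat := map predn (filter (fun x => 0 < x) s).

Lemma P2_cons x s : P2 (x :: s) = 2 ^ x + P2 s.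
Proof. by rewrite /P2 big_cons. Qed.

Lemma P2_cat s t : P2 (s ++ t) = P2 s + P2 t.
Proof. by rewrite /P2 big_cat. Qed.

Lemma P2_nseq0 h : P2 (nseq h 0) = h.
Proof. elim: h => [|h IH]; first by rewrite /P2 big_nil.
by rewrite [nseq _ _]/= P2_cons IH expn0 add1n. Qed.

Lemma P2_dec s : P2 s = count_mem 0 s + 2 * P2 (shr s).
Proof.
elim: s => [|[|x] s IH]; first by rewrite /P2 /shr /= !big_nil.
- by rewrite /shr /= P2_cons IH expn0 /shr addnA.
- rewrite /shr /= !P2_cons IH /shr expnS add0n. set a := count_mem _ _. set b := P2 _. lia.
Qed.

Lemma size_dec s : size s = count_mem 0 s + size (shr s).
Proof.
elim: s => [|[|x] s IH] //=; rewrite /shr /= in IH *; lia.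
Qed.

Lemma key M : forall s t p q, uniq t -> all (fun b => b < M) t ->
  P2 s + p * 2 ^ M = q * 2 ^ M + P2 t -> (size t <= size s) && (p <= q).
Proof.
elim: M => [|M IH] s t p q ut al.
  case: t ut al => [|b t] //= _ _; rewrite /P2 big_nil => h.
  rewrite expn0 in h; lia.
move=> h.
have ct : count_mem 0 t <= 1 by rewrite (count_uniq_mem _ ut) leq_b1.
have hs := P2_dec s; have ht := P2_dec t.
have hh := odd_double_half (count_mem 0 s).
set cs := count_mem 0 s in hs hh; set ct' := count_mem 0 t in ct ht.
rewrite -/cs in hh.
have eo : odd cs = ct' :> nat.
  move: h; rewrite hs ht expnS; case: (odd cs) hh => /= hh; lia.
have ut' : uniq (shr t).
  rewrite /shr map_inj_in_uniq ?filter_uniq //.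
  move=> x y; rewrite !mem_filter => /andP[x0 _] /andP[y0 _] /=; lia.
have al' : all (fun b => b < M) (shr t).
  apply/allP => x /mapP[y]; rewrite mem_filter => /andP[y0 yt] ->.
  have := allP al y yt => /= ; lia.
have := IH (nseq (cs./2) 0 ++ shr s) (shr t) p q ut' al'.
rewrite P2_cat P2_nseq0 => /(_ _)/andP[].
  move: h; rewrite hs ht expnS; lia.
rewrite size_cat size_nseq => h1 h2; apply/andP; split => //.
rewrite (size_dec s) (size_dec t) -/cs -/ct'. rewrite eo -muln2 in hh; clearbody cs ct'.
move: h1 hh; move: (cs ./2) (size (shr t)) (size (shr s)) => x y z.
lia.
Qed.

Lemma sizeI n : size (index_enum 'I_n) = n.
Proof. by rewrite /index_enum unlock -enumT -cardT card_ord. Qed.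

Local Open Scope ring_scope.

Theorem mainTheorem8 (k m l : nat) (d : 'I_k -> nat) (e : 'I_l -> nat)
  (hd1 : forall i : 'I_k, (1 <= d i)%N)
  (hdmono : forall i j : 'I_k, (i <= j)%N -> (d i <= d j)%N)
  (he1 : forall i : 'I_l, (1 <= e i)%N)
  (hemono : forall i j : 'I_l, (i < j)%N -> (e i < e j)%N)
  (heq : \sum_(i < k) (1 + ((2 : rat) ^+ d i)^-1)
         = m%:R + \sum_(i < l) ((2 : rat) ^+ e i)^-1) :
  (l <= m)%N.
Proof.
set N := (\sum_(i < k) d i + \sum_(j < l) e j)%N.
have dN i : (d i <= N)%N.
  apply: leq_trans (leq_addr _ _).
  by rewrite (bigD1 i) //= leq_addr.
have eN j : (e j <= N)%N.
  apply: leq_trans (leq_addl _ _).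
  by rewrite (bigD1 j) //= leq_addr.
have inv a : (a <= N)%N -> (2:rat) ^+ N * ((2:rat) ^+ a)^-1 = (2 ^ (N - a))%:R.
  move=> aN; have -> : (2:rat) ^+ N = 2 ^+ (N - a) * 2 ^+ a by rewrite -exprD subnK.
  by rewrite mulfK ?expf_neq0 // natrX.
set s := map (fun i => N - d i)%N (index_enum 'I_k).
set t := map (fun j => N - e j)%N (index_enum 'I_l).
have ut : uniq t.
  rewrite map_inj_uniq ?index_enum_uniq // => i j /= hij.
  have : e i = e j.
    have := eN i; have := eN j; lia.
  move=> eij; apply: val_inj => /=; case: (ltngtP (val i) (val j)) => // hl.
    by have := hemono i j hl; lia.
  by have := hemono j i hl; lia.
have al : all (fun b => b < N)%N t.
  apply/allP => x /mapP[j _ ->]; have := eN j; have := he1 j; lia.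
have E : (P2 s + k * 2 ^ N = m * 2 ^ N + P2 t)%N.
  apply/eqP; rewrite -(eqr_nat rat) natrD natrM natrD natrM natrX.
  rewrite /P2 /s /t !big_map !natr_sum.
  have H := congr1 (fun x => (2:rat) ^+ N * x) heq; rewrite /= in H.
  rewrite mulr_sumr mulrDr mulr_sumr in H.
  rewrite (eq_bigr (fun i : 'I_k => (2 ^ (N - d i))%:R + 2 ^+ N)) in H; last first.
    by move=> i _; rewrite mulrDr mulr1 inv // addrC.
  rewrite [X in _ = _ + X](eq_bigr (fun i : 'I_l => (2 ^ (N - e i))%:R)) in H; last first.
    by move=> i _; rewrite inv.
  rewrite big_split /= sumr_const card_ord in H.
  apply/eqP; rewrite [k%:R * _]mulrC [m%:R * _]mulrC mulr_natr.
  exact: H.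
have /andP[h1 h2] := key N s t k m ut al E.
by move: h1; rewrite /s /t !size_map !sizeI => h1; apply: leq_trans h1 h2.
Qed.
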